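(* Let $A$ be a commutative noetherian local ring, let $x,y\in A$ be an exact pair of zero divisors, and let $a\in A$. Then the sequence of free $A$-modules \[\boldsymbol{F}=\ \cdots\to A^2\xrightarrow{\gamma_a}A^2\xrightarrow{\eta_a}A^2\xrightarrow{\gamma_a}A^2\xrightarrow{\eta_a}\cdots\] is an exact complex. Moreover, with $\varphi=\begin{pmatrix}0&1\\-1&0\end{pmatrix}$ one has $\varphi\gamma_a^t=\eta_a\varphi$ and $\varphi\eta_a^t=\gamma_a\varphi$ (where ${}^t$ denotes transposition), so that $\varphi$ in each degree gives an isomorphism of complexes $\operatorname{Hom}_A(\boldsymbol{F},A)\xrightarrow{\cong}\boldsymbol{F}$, where $\operatorname{Hom}_A(A^2,A)$ is identified with $A^2$ so that the dual of a matrix is its transpose. In particular, $\operatorname{Hom}_A(\boldsymbol{F},A)$ is exact.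
   Context: Two non-units $x,y\in A$ form an exact pair of zero divisors if $\operatorname{Ann}_A(x)=(y)$ and $\operatorname{Ann}_A(y)=(x)$. For $a\in A$, $\gamma_a=\begin{pmatrix} x & a\\ 0 & y\end{pmatrix}$ and $\eta_a=\begin{pmatrix} y & -a\\ 0 & x\end{pmatrix}$, viewed as $A$-linear maps $A^2\to A^2$ acting on column vectors by left multiplication. *)

(* Defs.v *)
From HB Require Import structures.
From mathcomp Require Import all_boot all_order all_algebra.
Set Implicit Arguments. Unset Strict Implicit. Unset Printing Implicit Defensive.
Import GRing.Theory.
Local Open Scope ring_scope.

Section Defs.
Variable A : comUnitRingType.

Definition is_ideal (I : A -> Prop) : Prop :=
  [/\ I 0, (forall u v, I u -> I v -> I (u + v)) & (forall r u, I u -> I (r * u))].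

Definition noetherian : Prop :=
  forall I : A -> Prop, is_ideal I ->
    exists s : seq A, forall z, I z <->
      exists c : 'I_(size s) -> A, z = \sum_(i < size s) c i * s`_i.

Definition maximal_ideal (M : A -> Prop) : Prop :=
  is_ideal M /\ ~ M 1 /\
  forall J : A -> Prop, is_ideal J -> (forall z, M z -> J z) ->
    J 1 \/ (forall z, J z <-> M z).

Definition local_ring : Prop :=
  exists M, maximal_ideal M /\
    forall N, maximal_ideal N -> forall z, N z <-> M z.

Definition in_principal (y z : A) : Prop := exists c, z = c * y.

Definition ann_eq (x y : A) : Prop :=
  forall z, z * x = 0 <-> in_principal y z.

Definition exact_pair (x y : A) : Prop :=
  x \notin GRing.unit /\ y \notin GRing.unit /\ ann_eq x y /\ ann_eq y x.

Definition mx2 (p q r s : A) : 'M[A]_2 :=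
  \matrix_(i < 2, j < 2)
    (if i == 0 then (if j == 0 then p else q) else (if j == 0 then r else s)).

Definition gamma_mx (x y a : A) : 'M[A]_2 := mx2 x a 0 y.
Definition eta_mx (x y a : A) : 'M[A]_2 := mx2 y (- a) 0 x.
Definition phi : 'M[A]_2 := mx2 0 1 (-1) 0.

(* exactness at the middle of A^2 --g--> A^2 --f--> A^2 (maps act on column
   vectors by left multiplication): f o g = 0 and ker f = im g *)
Definition exact_at (g f : 'M[A]_2) : Prop :=
  f *m g = 0 /\
  forall v : 'cV[A]_2, f *m v = 0 -> exists w : 'cV[A]_2, v = g *m w.

End Defs.

(* Main.v *)
Require Import Defs.
From HB Require Import structures.
From mathcomp Require Import all_boot all_order all_algebra.
From mathcomp Require Import ring.
Import GRing.Theory.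
Local Open Scope ring_scope.

Section H.
Variable A : comUnitRingType.

Lemma ord2P (i : 'I_2) : i = 0 \/ i = 1.
Proof. case: i => [[|[|n]]] //= Hi; [left|right]; exact: val_inj. Qed.

Lemma sum2 (F : 'I_2 -> A) : \sum_(i < 2) F i = F 0 + F 1.
Proof. rewrite big_ord_recr big_ord1 /=; congr (F _ + F _); exact: val_inj. Qed.

Lemma mx2_tr (p q r s : A) : (mx2 p q r s)^T = mx2 p r q s.
Proof.
apply/matrixP => i j; rewrite !mxE.
by case: (ord2P i) => ->; case: (ord2P j) => ->.
Qed.

Lemma mx2_mul (p q r s p' q' r' s' : A) :
  mx2 p q r s *m mx2 p' q' r' s' =
  mx2 (p * p' + q * r') (p * q' + q * s') (r * p' + s * r') (r * q' + s * s').
Proof.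
apply/matrixP => i j; rewrite !mxE sum2 !mxE.
by case: (ord2P i) => ->; case: (ord2P j) => ->.
Qed.

Lemma mx2_eq (p q r s p' q' r' s' : A) :
  p = p' -> q = q' -> r = r' -> s = s' -> mx2 p q r s = mx2 p' q' r' s'.
Proof. by move=> -> -> -> ->. Qed.

Lemma mx2_zero : mx2 0 0 0 0 = 0 :> 'M[A]_2.
Proof.
apply/matrixP => i j; rewrite !mxE.
by case: (ord2P i) => ->; case: (ord2P j) => ->.
Qed.

Lemma mx2_v0 (p q r s : A) (v : 'cV[A]_2) :
  (mx2 p q r s *m v) 0 0 = p * v 0 0 + q * v 1 0.
Proof. by rewrite !mxE sum2 !mxE. Qed.

Lemma mx2_v1 (p q r s : A) (v : 'cV[A]_2) :
  (mx2 p q r s *m v) 1 0 = r * v 0 0 + s * v 1 0.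
Proof. by rewrite !mxE sum2 !mxE. Qed.

Lemma cv2_eq (v w : 'cV[A]_2) : v 0 0 = w 0 0 -> v 1 0 = w 1 0 -> v = w.
Proof.
move=> H0 H1; apply/matrixP => i j.
have -> : j = 0 by apply: val_inj; case: j => [[|]].
by case: (ord2P i) => ->.
Qed.

Definition cv2 (c d : A) : 'cV[A]_2 := \col_i (if i == 0 then c else d).


Lemma cv2_0 c d : cv2 c d 0 0 = c. Proof. by rewrite mxE. Qed.
Lemma cv2_1 c d : cv2 c d 1 0 = d. Proof. by rewrite mxE. Qed.


End H.
Arguments cv2 {A}.

Theorem lemma3p4 (A : comUnitRingType) (x y a : A) :
  noetherian A -> local_ring A -> exact_pair x y ->
  (* F : ... -> A^2 -gamma-> A^2 -eta-> A^2 -gamma-> A^2 -eta-> ... is an exact complex *)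
  (exact_at (gamma_mx x y a) (eta_mx x y a) /\ exact_at (eta_mx x y a) (gamma_mx x y a)) /\
  (* phi gamma^t = eta phi, phi eta^t = gamma phi, phi invertible *)
  (phi A *m (gamma_mx x y a)^T = eta_mx x y a *m phi A /\
   phi A *m (eta_mx x y a)^T = gamma_mx x y a *m phi A /\
   phi A \in unitmx) /\
  (* Hom_A(F, A) : ... -> A^2 -gamma^t-> A^2 -eta^t-> A^2 -gamma^t-> ... is exact *)
  (exact_at (gamma_mx x y a)^T (eta_mx x y a)^T /\ exact_at (eta_mx x y a)^T (gamma_mx x y a)^T).
Proof.
move=> _ _ [_ [_ [Ax Ay]]].
have yx : y * x = 0 by apply: (proj2 (Ax y)); exists 1; rewrite mul1r.
have xy : x * y = 0 by rewrite mulrC.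
rewrite /exact_at /gamma_mx /eta_mx /phi !mx2_tr !mx2_mul.
split; [split|split].
- split; first by rewrite -mx2_zero; apply: mx2_eq; ring: xy yx.
  move=> v Hv.
  have H0 := congr1 (fun M : 'cV[A]_2 => M 0 0) Hv.
  have H1 := congr1 (fun M : 'cV[A]_2 => M 1 0) Hv.
  rewrite /= mx2_v0 mx2_v1 !mxE in H0 H1.
  have [c Hc] : in_principal y (v 1 0) by apply: (proj1 (Ax _)); rewrite mulrC -H1; ring.
  have [d Hd] : in_principal x (v 0 0 - a * c) by apply: (proj1 (Ay _)); rewrite mulrC -H0 Hc; ring.
  exists (cv2 d c); apply: cv2_eq; rewrite ?mx2_v0 ?mx2_v1 cv2_0 cv2_1.
    by rewrite -[v 0 0](subrK (a * c)) Hd; ring. by rewrite Hc; ring.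
- split; first by rewrite -mx2_zero; apply: mx2_eq; ring: xy yx.
  move=> v Hv.
  have H0 := congr1 (fun M : 'cV[A]_2 => M 0 0) Hv.
  have H1 := congr1 (fun M : 'cV[A]_2 => M 1 0) Hv.
  rewrite /= mx2_v0 mx2_v1 !mxE in H0 H1.
  have [c Hc] : in_principal x (v 1 0) by apply: (proj1 (Ay _)); rewrite mulrC -H1; ring.
  have [d Hd] : in_principal y (v 0 0 + a * c) by apply: (proj1 (Ax _)); rewrite mulrC -H0 Hc; ring.
  exists (cv2 d c); apply: cv2_eq; rewrite ?mx2_v0 ?mx2_v1 cv2_0 cv2_1.
    by rewrite -[v 0 0](addrK (a * c)) Hd; ring. by rewrite Hc; ring.
- split; first by apply: mx2_eq; ring.
  split; first by apply: mx2_eq; ring.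
  apply: (proj1 (@mulmx1_unit _ _ _ (mx2 0 (-1) 1 0) _)).
  rewrite mx2_mul; apply/matrixP => i j; rewrite !mxE.
  by case: (ord2P i) => ->; case: (ord2P j) => ->; rewrite /= ?mulr0 ?mul0r ?add0r ?addr0 ?mulN1r ?opprK ?mulr1.

- split.
  split; first by rewrite -mx2_zero; apply: mx2_eq; ring: xy yx.
  move=> v Hv.
  have H0 := congr1 (fun M : 'cV[A]_2 => M 0 0) Hv.
  have H1 := congr1 (fun M : 'cV[A]_2 => M 1 0) Hv.
  rewrite /= mx2_v0 mx2_v1 !mxE in H0 H1.
  have [c Hc] : in_principal x (v 0 0) by apply: (proj1 (Ay _)); rewrite mulrC -H0; ring.
  have [d Hd] : in_principal y (v 1 0 - a * c) by apply: (proj1 (Ax _)); rewrite mulrC -H1 Hc; ring.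
  exists (cv2 c d); apply: cv2_eq; rewrite ?mx2_v0 ?mx2_v1 cv2_0 cv2_1.
    by rewrite Hc; ring. by rewrite -[v 1 0](subrK (a * c)) Hd; ring.
  split; first by rewrite -mx2_zero; apply: mx2_eq; ring: xy yx.
  move=> v Hv.
  have H0 := congr1 (fun M : 'cV[A]_2 => M 0 0) Hv.
  have H1 := congr1 (fun M : 'cV[A]_2 => M 1 0) Hv.
  rewrite /= mx2_v0 mx2_v1 !mxE in H0 H1.
  have [c Hc] : in_principal y (v 0 0) by apply: (proj1 (Ax _)); rewrite mulrC -H0; ring.
  have [d Hd] : in_principal x (v 1 0 + a * c) by apply: (proj1 (Ay _)); rewrite mulrC -H1 Hc; ring.
  exists (cv2 c d); apply: cv2_eq; rewrite ?mx2_v0 ?mx2_v1 cv2_0 cv2_1.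
    by rewrite Hc; ring. by rewrite -[v 1 0](addrK (a * c)) Hd; ring.
Qed.
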